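(* Let $X$ be a Tychonoff space. Then $C(X)=T''(X)$ if and only if $X$ is an almost $P$-space.
   Context: $C(X)$ is the ring of real-valued continuous functions on $X$. A cozero set in $X$ is a set $coz(g)=\{x: g(x)\neq 0\}$ with $g\in C(X)$; its complement $Z(g)$ is a zero set. $T''(X)$ is the set of all functions $f\colon X\to\mathbb{R}$ for which there is a dense cozero set $U$ of $X$ with $f|_U$ continuous. $X$ is an almost $P$-space if every non-empty $G_\delta$-set of $X$ (equivalently, for Tychonoff $X$, every non-empty zero set) has non-empty interior. *)

(* Defs.v *)
From HB Require Import structures.
From mathcomp Require Import all_boot all_order all_algebra.
From mathcomp Require Import all_classical all_reals all_analysis.
Set Implicit Arguments. Unset Strict Implicit. Unset Printing Implicit Defensive.
Import Order.TTheory GRing.Theory Num.Theory.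
Import numFieldTopology.Exports numFieldNormedType.Exports.
Local Open Scope classical_set_scope.
Local Open Scope ring_scope.

Definition tychonoff_space (R : realType) (X : topologicalType) : Prop :=
  accessible_space X /\
  (forall (x : X) (B : set X), closed B -> ~ B x ->
     exists f : X -> R, continuous f /\ f x = 0 /\ (forall y, B y -> f y = 1)).

Definition coz (R : realType) (X : topologicalType) (g : X -> R) : set X :=
  [set x | g x != 0].

Definition cozero_set (R : realType) (X : topologicalType) (U : set X) : Prop :=
  exists g : X -> R, continuous g /\ U = coz g.

Definition CX (R : realType) (X : topologicalType) : set (X -> R) :=
  [set f | continuous f].

Definition Tpp (R : realType) (X : topologicalType) : set (X -> R) :=
  [set f | exists U : set X, @cozero_set R X U /\ dense U /\
                             {within U, continuous f}].

Definition G_delta (X : topologicalType) (A : set X) : Prop :=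
  exists F : nat -> set X, (forall n, open (F n)) /\ A = \bigcap_n F n.

Definition almost_P_space (X : topologicalType) : Prop :=
  forall A : set X, G_delta A -> A !=set0 -> interior A !=set0.

(* Main.v *)
Require Import Defs.
From HB Require Import structures.
From mathcomp Require Import all_boot all_order all_algebra.
From mathcomp Require Import all_classical all_reals all_analysis.
From mathcomp Require Import lra.
Local Open Scope classical_set_scope.
Local Open Scope ring_scope.

Section SupCont.
Import Order.TTheory GRing.Theory Num.Theory.
Import numFieldTopology.Exports numFieldNormedType.Exports.
Variables (R : realType) (X : topologicalType) (t : nat -> X -> R).
Hypothesis tc : forall n, continuous (t n).
Hypothesis tb : forall n y, 0 <= t n y /\ t n y <= n.+1%:R^-1.

Definition Sset (y : X) : set R := range (fun n => t n y).

Lemma Sset_ub y : has_ubound (Sset y).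
Proof.
exists 1 => _ [n _ <-]; apply: le_trans (tb n y).2 _.
by rewrite invf_le1 ?ltr0n // ler1n.
Qed.

Lemma t_le_sup n y : t n y <= sup (Sset y).
Proof. by apply: (ub_le_sup (Sset_ub y)); exists n. Qed.

Lemma sup_ge0 y : 0 <= sup (Sset y).
Proof. exact: le_trans (tb 0 y).1 (t_le_sup 0 y). Qed.

Lemma sup_leP y (c : R) : (forall n, t n y <= c) -> sup (Sset y) <= c.
Proof.
move=> H; apply: ge_sup; first by exists (t 0 y); exists 0%N.
by move=> _ [n _ <-]; exact: H.
Qed.

Lemma sup_cont : continuous (fun y => sup (Sset y)).
Proof.
move=> y; apply/(@cvgrPdist_lt _ _ X (nbhs y) _) => e e0.
have e20 : 0 < e / 2 by rewrite divr_gt0.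
have [N _ HN] := near_infty_natSinv_lt (PosNum e20).
have near_all : forall M, \forall z \near y,
    forall n, (n < M)%N -> `|t n y - t n z| < e / 2.
  elim=> [|M IH]; first by apply: nearW => z n.
  have /cvgrPdist_lt/(_ _ e20) HM := tc M y.
  move: IH HM; apply: filterS2 => z H1 H2 n; rewrite ltnS leq_eqVlt => /orP[/eqP->//|].
  exact: H1.
have key : forall a b, (forall n, (n < N)%N -> `|t n b - t n a| < e / 2) ->
    sup (Sset a) <= sup (Sset b) + e / 2.
  move=> a b Hab; apply: sup_leP => n; have [Hn|Hn] := ltnP n N.
    have := Hab n Hn; rewrite ltr_distl => /andP[h1 h2].
    have := t_le_sup n b; lra.
  have h1 : n.+1%:R^-1 < e / 2 := HN n Hn.
  have := (tb n a).2; have := sup_ge0 b.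
  by move=> s0 tn; rewrite (le_trans tn) // (le_trans (ltW h1)) // lerDr.
have fin : forall z, (forall n, (n < N)%N -> `|t n y - t n z| < e / 2) ->
    `|sup (Sset y) - sup (Sset z)| < e.
  move=> z Hz; have k1 := key z y Hz.
  have k2 : sup (Sset y) <= sup (Sset z) + e / 2.
    by apply: key => n Hn; rewrite distrC; exact: Hz.
  rewrite ltr_distl; apply/andP; split; lra.
exact: (filterS fin (near_all N)).
Qed.

End SupCont.

Section Main.
Import Order.TTheory GRing.Theory Num.Theory.
Import numFieldTopology.Exports numFieldNormedType.Exports.

Lemma coz_nbhs (R : realType) (X : topologicalType) (g : X -> R) (w : X) :
  continuous g -> g w != 0 -> \forall z \near w, g z != 0.
Proof.
move=> gc gw.
have /(@cvgrPdist_lt _ _ X (nbhs w) _)/(_ `|g w|) H := gc w.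
have gw0 : 0 < `|g w| by rewrite normr_gt0.
have {}H := H gw0.
apply: filterS H => z; apply: contraTneq => ->.
by rewrite subr0 ltxx.
Qed.

Lemma dir1 (R : realType) (X : topologicalType) :
  @tychonoff_space R X -> @CX R X = @Tpp R X -> almost_P_space X.
Proof.
move=> [_ tych] CT A [F [Fo ->]] [x Ax]; apply: contrapT => nint.
have : forall n, exists f : X -> R, continuous f /\ f x = 0 /\
    (forall y, (~` F n) y -> f y = 1).
  move=> n; apply: tych; first exact: open_closedC.
  by move=> /=; apply; exact: Ax.
move=> /choice [fs Hfs].
pose t n y := Num.min `|fs n y| n.+1%:R^-1.
have tc : forall n, continuous (t n).
  move=> n; apply: min_fun_continuous; last exact: cst_continuous.
  move=> y; apply: continuous_comp; first exact: (Hfs n).1.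
  exact: norm_continuous.
have tb : forall n y, 0 <= t n y /\ t n y <= n.+1%:R^-1.
  by move=> n y; rewrite /t le_min ge_min normr_ge0 invr_ge0 ler0n lexx orbT.
pose g y := sup (@Sset R X t y).
have gc : continuous g := @sup_cont R X t tc tb.
have gx : g x = 0.
  apply/le_anti/andP; split; last exact: (@sup_ge0 R X t tb).
  rewrite /g; apply: (@sup_leP R X t) => n; rewrite /t (Hfs n).2.1 normr0 ge_min lexx //.
have gA : forall y, g y = 0 -> forall n, F n y.
  move=> y gy n; apply: contrapT => Fny.
  have := @t_le_sup R X t tb n y; rewrite -/(g y) gy /t ((Hfs n).2.2 y Fny) normr1.
  have h : 0 < n.+1%:R^-1 :> R by rewrite invr_gt0 ltr0n.
  by rewrite ge_min ler10 /= leNgt h.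
pose U := coz g.
have dU : dense U.
  move=> O [z Oz] oO; apply: contrapT => nOU; apply: nint; exists z.
  have Oz' : nbhs z O by apply: open_nbhs_nbhs.
  have H1 : forall w, O w -> (\bigcap_n F n) w.
    move=> w Ow n _; apply: gA; apply/eqP; apply: contrapT => gw.
    by apply: nOU; exists w; split => //; apply/negP.
  exact: (filterS H1 Oz').
pose f y : R := (g y != 0)%:R.
have fT : Tpp f.
  exists U; split; first by exists g.
  split => //; apply: continuous_in_subspaceT => w; rewrite inE /= => gw.
  have H1 : forall z, g z != 0 -> f z = f w by move=> z gz; rewrite /f gz gw.
  apply: cvg_near_cst; exact: (filterS H1 (@coz_nbhs _ _ g w gc gw)).
have : CX f by rewrite CT.
move=> /(_ x) /(@cvgrPdist_lt _ _ X (nbhs x) _)/(_ 1 ltr01).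
rewrite nbhsE => -[B [oB Bx] BP].
have [w [Bw Uw]] := dU B (ex_intro _ x Bx) oB.
have := BP w Bw; rewrite /f gx eqxx /=.
by rewrite /U /coz /= in Uw; rewrite Uw sub0r normrN normr1 ltxx.
Qed.

Lemma dir2 (R : realType) (X : topologicalType) :
  almost_P_space X -> @CX R X = @Tpp R X.
Proof.
move=> aP; apply/seteqP; split.
  move=> f fc; exists setT; split.
    exists (fun _ => 1); split; first exact: cst_continuous.
    by apply/seteqP; split => y //= _; rewrite /coz /= oner_neq0.
  split; first by move=> O O0 _; rewrite setIT.
  exact: continuous_subspaceT.
move=> f [U [[g [gc ->]] [dU fU]]].
have allU : forall y, g y != 0.
  move=> y; apply/negP => /eqP gy0.
  pose Z := [set z | g z = 0].
  have GZ : G_delta Z.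
    exists (fun n => g @^-1` ball 0 n.+1%:R^-1); split.
      move=> n; apply: open_comp; last exact: ball_open.
      by move=> z _; exact: gc.
    apply/seteqP; split => z /=.
      by move=> gz n _ /=; rewrite gz; apply: ballxx; rewrite invr_gt0 ltr0n.
    move=> H; apply/eqP; apply: contrapT => /negP gz.
    have gz0 : 0 < `|g z| by rewrite normr_gt0.
    have [N _ HN] := near_infty_natSinv_lt (PosNum gz0).
    have h1 : N.+1%:R^-1 < `|g z| := HN N (leqnn N).
    have := H N I; rewrite -ball_normE /ball_ /= sub0r normrN => h2.
    by have := lt_trans h1 h2; rewrite ltxx.
  have [w Zw] := aP Z GZ (ex_intro _ y gy0).
  have [v [Zv Uv]] := dU _ (ex_intro _ w Zw) (@open_interior _ Z).
  by move: Uv; rewrite /coz /= (interior_subset Zv) eqxx.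
have UT : coz g = setT by apply/seteqP; split => y //= _; exact: allU.
rewrite UT in fU.
by move=> y; have := fU y; rewrite /continuous_at nbhs_subspaceT.
Qed.

End Main.

Theorem theorem2p2 (R : realType) (X : topologicalType) :
  @tychonoff_space R X -> (@CX R X = @Tpp R X <-> almost_P_space X).
Proof.
move=> tX; split; first exact: dir1.
exact: dir2.
Qed.
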